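(* Let $\sigma>0$, $0\le\delta<\min(1,\sigma)$ and $0<a\le1$. For every integer $t>\tau:=\big(\frac{2(\sigma-\delta)}{a}\big)^{\frac{1}{1-\delta}}$, $$\sum_{s=1}^{t-1}\Big[\frac{1}{s^\sigma}\prod_{k=s+1}^{t-1}\Big(1-\frac{a}{k^\delta}\Big)\Big]\le A(a,\sigma,\delta)\,t^{-(\sigma-\delta)},$$ where $A(a,\sigma,\delta)=2^\sigma\max\{1+\frac2a,\,1+\frac{1}{\sigma-1}(\frac{2(\sigma-\delta)}{a})^{\frac{\sigma-\delta}{1-\delta}}\}$ if $\sigma>1$; $A(a,\sigma,\delta)=2^\sigma\max\{1+\frac2a,\,1+\frac2a\ln(\frac{2(1-\delta)}{a})\}$ if $\sigma=1$; $A(a,\sigma,\delta)=2^\sigma\max\{1+\frac2a,\,1+\frac{2(\sigma-\delta)}{a(1-\sigma)}\}$ if $0<\sigma<1$. Moreover, for $\delta=1$ and $a-\sigma+1\neq0$, $$\sum_{s=1}^{t-1}\Big[\frac{1}{s^\sigma}\prod_{k=s+1}^{t-1}\Big(1-\frac{a}{k}\Big)\Big]\le A(a,\sigma,1)\,t^{-\min(\sigma-1,a)},$$ where $A(a,\sigma,1)=2^\sigma\big(1+\frac{1}{|a-\sigma+1|}\big)$.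
   Context: Empty products equal $1$. In the case $\delta=1$ the same $a\in(0,1]$ and $\sigma>0$ are considered and $t$ ranges over positive integers. *)

(* Defs.v *)
From Stdlib Require Import Reals List.
Open Scope R_scope.

(* sum_{k=m}^{n} f k  (empty, i.e. 0, if n < m) *)
Definition sum_from_to (f : nat -> R) (m n : nat) : R :=
  fold_right Rplus 0 (map f (seq m (S n - m))).

(* prod_{k=m}^{n} f k  (empty, i.e. 1, if n < m) *)
Definition prod_from_to (f : nat -> R) (m n : nat) : R :=
  fold_right Rmult 1 (map f (seq m (S n - m))).

Definition Ssum (a sigma delta : R) (t : nat) : R :=
  sum_from_to
    (fun s => / Rpower (INR s) sigma *
       prod_from_to (fun k => 1 - a / Rpower (INR k) delta) (S s) (t - 1))
    1 (t - 1).

Definition Aconst (a sigma delta : R) : R :=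
  Rpower 2 sigma *
  Rmax (1 + 2 / a)
    (if Rlt_dec 1 sigma then
       1 + / (sigma - 1) * Rpower (2 * (sigma - delta) / a) ((sigma - delta) / (1 - delta))
     else if Req_EM_T sigma 1 then
       1 + 2 / a * ln (2 * (1 - delta) / a)
     else
       1 + 2 * (sigma - delta) / (a * (1 - sigma))).

Definition Aconst1 (a sigma : R) : R :=
  Rpower 2 sigma * (1 + / Rabs (a - sigma + 1)).

(* Main.v *)
Require Import Defs.
From Stdlib Require Import Reals Lra Lia List.
Open Scope R_scope.

Lemma Rpower_pos x y : 0 < Rpower x y.
Proof. unfold Rpower; apply exp_pos. Qed.

Lemma ln_le_id y : -1 < y -> ln (1 + y) <= y.
Proof.
  intro Hy. destruct (Rle_dec (ln (1+y)) y) as [H|H]; auto.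
  exfalso. apply Rnot_le_lt in H. apply exp_increasing in H.
  rewrite exp_ln in H by lra. pose proof (exp_ineq1_le y). lra.
Qed.

Lemma exp_tangent u m : exp m * (1 + u - m) <= exp u.
Proof.
  replace u with (m + (u - m)) at 2 by ring. rewrite exp_plus.
  apply Rmult_le_compat_l. left; apply exp_pos.
  pose proof (exp_ineq1_le (u - m)). lra.
Qed.

Lemma bern_neg c y : c <= 0 -> -1 < y -> 1 + c * y <= Rpower (1 + y) c.
Proof.
  intros Hc Hy. unfold Rpower.
  pose proof (exp_ineq1_le (c * ln (1+y))).
  pose proof (ln_le_id y Hy).
  assert (c * y <= c * ln (1+y)) by (apply Rmult_le_compat_neg_l; lra).
  lra.
Qed.

Lemma bern_conc c y : 0 <= c <= 1 -> -1 < y -> Rpower (1 + y) c <= 1 + c * y.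
Proof.
  intros [Hc0 Hc1] Hy. unfold Rpower.
  set (u := ln (1+y)). set (m := c * u).
  pose proof (exp_tangent u m) as H1. pose proof (exp_tangent 0 m) as H2.
  rewrite exp_0 in H2.
  assert (Eu : exp u = 1 + y) by (unfold u; apply exp_ln; lra).
  assert (c * (exp m * (1 + u - m)) <= c * exp u) by (apply Rmult_le_compat_l; lra).
  assert ((1 - c) * (exp m * (1 + 0 - m)) <= (1 - c) * 1) by (apply Rmult_le_compat_l; lra).
  assert (E : c * (exp m * (1 + u - m)) + (1 - c) * (exp m * (1 + 0 - m)) = exp m)
    by (unfold m; ring).
  rewrite Eu in H. replace (c * u) with m by reflexivity. assert (c * (1 + y) = c + c * y) by ring. lra.
Qed.

Lemma bern_conv c y : 1 <= c -> -1 < y -> 1 + c * y <= Rpower (1 + y) c.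
Proof.
  intros Hc Hy.
  destruct (Rle_dec (1 + c * y) 0) as [H|H].
  - pose proof (Rpower_pos (1+y) c); lra.
  - apply Rnot_le_lt in H.
    assert (Hb : Rpower (1 + c * y) (/ c) <= 1 + / c * (c * y)).
    { apply bern_conc. split. left; apply Rinv_0_lt_compat; lra.
      rewrite <- Rinv_1. apply Rinv_le_contravar; lra. lra. }
    replace (/ c * (c * y)) with y in Hb by (field; lra).
    assert (E : Rpower (Rpower (1 + c * y) (/ c)) c = 1 + c * y).
    { rewrite Rpower_mult. replace (/ c * c) with 1 by (field; lra).
      apply Rpower_1; lra. }
    rewrite <- E. apply Rle_Rpower_l. lra. split. apply Rpower_pos. exact Hb.
Qed.

Lemma Rpower_m1 z c : 0 < z -> Rpower z (c - 1) = Rpower z c / z.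
Proof.
  intro Hz. unfold Rminus. rewrite Rpower_plus, Rpower_Ropp, Rpower_1 by lra.
  reflexivity.
Qed.

Lemma split_pow x c : 0 < x ->
  Rpower x c = Rpower (x + 1) c * Rpower (1 + (- / (x + 1))) c.
Proof.
  intro Hx.
  assert (H1 : 0 < 1 + - / (x+1)).
  { replace (1 + - / (x+1)) with (x / (x+1)) by (field; lra).
    apply Rdiv_lt_0_compat; lra. }
  rewrite Rpower_mult_distr by lra.
  f_equal. field. lra.
Qed.

Lemma tele_neg c x : c < 0 -> 0 < x ->
  - c * Rpower (x + 1) (c - 1) <= Rpower x c - Rpower (x + 1) c.
Proof.
  intros Hc Hx. rewrite Rpower_m1 by lra. rewrite (split_pow x c Hx).
  assert (Hy : -1 < - / (x + 1)).
  { assert (/ (x+1) < 1). { rewrite <- Rinv_1. apply Rinv_lt_contravar; lra. } lra. }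
  pose proof (bern_neg c _ (Rlt_le _ _ Hc) Hy) as B.
  pose proof (Rpower_pos (x+1) c) as P.
  apply Rmult_le_compat_l with (r := Rpower (x+1) c) in B; [|lra].
  assert (E : Rpower (x + 1) c * (1 + c * - / (x + 1)) = Rpower (x+1) c + - c * (Rpower (x + 1) c / (x + 1)))
    by (field; lra).
  lra.
Qed.

Lemma tele_pos c x : 0 < c < 1 -> 0 < x ->
  c * Rpower (x + 1) (c - 1) <= Rpower (x + 1) c - Rpower x c.
Proof.
  intros Hc Hx. rewrite Rpower_m1 by lra. rewrite (split_pow x c Hx).
  assert (Hy : -1 < - / (x + 1)).
  { assert (/ (x+1) < 1). { rewrite <- Rinv_1. apply Rinv_lt_contravar; lra. } lra. }
  assert (Hc' : 0 <= c <= 1) by lra.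
  pose proof (bern_conc c _ Hc' Hy) as B.
  pose proof (Rpower_pos (x+1) c) as P.
  apply Rmult_le_compat_l with (r := Rpower (x+1) c) in B; [|lra].
  assert (E : Rpower (x + 1) c * (1 + c * - / (x + 1)) = Rpower (x+1) c - c * (Rpower (x + 1) c / (x + 1)))
    by (field; lra).
  lra.
Qed.

Lemma sumL_app (l1 l2 : list R) :
  fold_right Rplus 0 (l1 ++ l2) = fold_right Rplus 0 l1 + fold_right Rplus 0 l2.
Proof. induction l1; simpl; [ring | rewrite IHl1; ring]. Qed.

Lemma prodL_app (l1 l2 : list R) :
  fold_right Rmult 1 (l1 ++ l2) = fold_right Rmult 1 l1 * fold_right Rmult 1 l2.
Proof. induction l1; simpl; [ring | rewrite IHl1; ring]. Qed.

Lemma sumL_scal (f g : nat -> R) c (l : list nat) :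
  (forall x, In x l -> g x = c * f x) ->
  fold_right Rplus 0 (map g l) = c * fold_right Rplus 0 (map f l).
Proof.
  induction l as [|x l IH]; intro H; simpl. ring.
  rewrite IH by (intros; apply H; right; auto). rewrite (H x) by (left; auto). ring.
Qed.

Lemma sumL_single (g : nat -> R) x : fold_right Rplus 0 (map g (x :: nil)) = g x + 0.
Proof. reflexivity. Qed.
Lemma prodL_single (g : nat -> R) x : fold_right Rmult 1 (map g (x :: nil)) = g x * 1.
Proof. reflexivity. Qed.

Lemma Ssum_1 a s d : Ssum a s d 1 = 0.
Proof. reflexivity. Qed.

Lemma Ssum_rec a s d u :
  Ssum a s d (S (S u)) =
  (1 - a / Rpower (INR (S u)) d) * Ssum a s d (S u) + / Rpower (INR (S u)) s.
Proof.
  unfold Ssum, sum_from_to.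
  replace (S (S (S u) - 1) - 1)%nat with (S u) by lia.
  replace (S (S u - 1) - 1)%nat with u by lia.
  rewrite seq_S, map_app, sumL_app.
  replace (1 + u)%nat with (S u) by lia.
  rewrite sumL_single. cbv beta.
  unfold prod_from_to.
  replace (S (S (S u) - 1) - S (S u))%nat with O by lia.
  change (seq (S (S u)) 0) with (@nil nat).
  change (fold_right Rmult 1 (map (fun k : nat => 1 - a / Rpower (INR k) d) nil)) with 1.
  rewrite Rmult_1_r, Rplus_0_r. f_equal.
  apply sumL_scal. intros x Hx. apply in_seq in Hx.
  replace (S (S (S u) - 1) - S x)%nat with (S (u - x)) by lia.
  replace (S (S u - 1) - S x)%nat with (u - x)%nat by lia.
  rewrite seq_S, map_app, prodL_app.
  replace (S x + (u - x))%nat with (S u) by lia.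
  rewrite prodL_single. ring.
Qed.

Lemma Rpower_1_base x : Rpower 1 x = 1.
Proof. unfold Rpower. rewrite ln_1, Rmult_0_r, exp_0. reflexivity. Qed.

Lemma INR_S_pos n : 0 < INR (S n).
Proof. apply lt_0_INR; lia. Qed.

Lemma INR_S_ge1 n : 1 <= INR (S n).
Proof. rewrite S_INR. pose proof (pos_INR n). lra. Qed.

Lemma step_pow b T : 0 <= b -> 0 < T ->
  (1 - b / T) * Rpower T (- b) <= Rpower (T + 1) (- b).
Proof.
  intros Hb HT.
  replace (T + 1) with (T * (1 + / T)) by (field; lra).
  rewrite <- Rpower_mult_distr by (try lra; assert (0 < / T) by (apply Rinv_0_lt_compat; lra); lra).
  assert (0 < / T) by (apply Rinv_0_lt_compat; lra).
  pose proof (bern_neg (- b) (/ T) ltac:(lra) ltac:(lra)) as B.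
  pose proof (Rpower_pos T (- b)).
  rewrite Rmult_comm. apply Rmult_le_compat_l; [lra|].
  unfold Rdiv. lra.
Qed.

Fixpoint Kf (e : R) (n : nat) : R :=
  match n with O => 0 | S m => Kf e m + Rpower (INR (S m) + 1) e end.

Lemma Kf_nonneg e n : 0 <= Kf e n.
Proof. induction n; [simpl; lra|]. change (Kf e (S n)) with (Kf e n + Rpower (INR (S n) + 1) e). pose proof (Rpower_pos (INR (S n) + 1) e). lra. Qed.

Lemma p2_main a sg n : 0 < sg -> 0 < a <= 1 ->
  Ssum a sg 1 (S n) <= Rpower 2 sg * Rpower (INR (S n)) (- a) * Kf (a - sg) n.
Proof.
  intros Hs Ha. induction n as [|n IH].
  - rewrite Ssum_1. simpl Kf. lra.
  - rewrite Ssum_rec. change (Kf (a - sg) (S n)) with (Kf (a - sg) n + Rpower (INR (S n) + 1) (a - sg)).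
    set (T := INR (S n)). replace (INR (S (S n))) with (T + 1) by (unfold T; rewrite (S_INR (S n)); ring).
    assert (HT : 1 <= T) by apply INR_S_ge1.
    rewrite Rpower_1 by lra.
    set (K := Kf (a - sg) n). set (S0 := Ssum a sg 1 (S n)) in *.
    assert (HK : 0 <= K) by apply Kf_nonneg.
    assert (H1 : 0 <= 1 - a / T).
    { assert (a / T <= 1). { apply Rmult_le_reg_r with T; [lra|]. unfold Rdiv. rewrite Rmult_assoc, Rinv_l by lra. lra. } lra. }
    pose proof (step_pow a T ltac:(lra) ltac:(lra)) as SP.
    pose proof (Rpower_pos 2 sg) as P2.
    assert (A1 : (1 - a / T) * S0 <= Rpower 2 sg * Rpower (T + 1) (- a) * K).
    { apply Rle_trans with ((1 - a / T) * (Rpower 2 sg * Rpower T (- a) * K)).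
      - apply Rmult_le_compat_l; auto.
      - replace ((1 - a / T) * (Rpower 2 sg * Rpower T (- a) * K))
          with (Rpower 2 sg * K * ((1 - a / T) * Rpower T (- a))) by ring.
        replace (Rpower 2 sg * Rpower (T + 1) (- a) * K) with (Rpower 2 sg * K * Rpower (T + 1) (- a)) by ring.
        apply Rmult_le_compat_l; auto. apply Rmult_le_pos; lra. }
    assert (A2 : / Rpower T sg <= Rpower 2 sg * Rpower (T + 1) (- a) * Rpower (T + 1) (a - sg)).
    { rewrite Rmult_assoc, <- Rpower_plus. replace (- a + (a - sg)) with (- sg) by ring.
      rewrite Rpower_Ropp. rewrite <- (Rmult_1_l (/ Rpower T sg)).
      apply Rmult_le_reg_r with (Rpower T sg * Rpower (T + 1) sg).
      { apply Rmult_lt_0_compat; apply Rpower_pos. }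
      pose proof (Rpower_pos T sg). pose proof (Rpower_pos (T+1) sg).
      replace (1 * / Rpower T sg * (Rpower T sg * Rpower (T + 1) sg)) with (Rpower (T+1) sg) by (field; lra).
      replace (Rpower 2 sg * / Rpower (T + 1) sg * (Rpower T sg * Rpower (T + 1) sg))
        with (Rpower 2 sg * Rpower T sg) by (field; lra).
      rewrite Rpower_mult_distr by lra. apply Rle_Rpower_l; lra. }
    lra.
Qed.

Lemma Kf_step e n : Kf e (S n) = Kf e n + Rpower (INR (S n) + 1) e.
Proof. reflexivity. Qed.

Lemma Kf_bound_ge0 e n : 0 <= e -> Kf e n <= Rpower (INR (S n)) (e + 1).
Proof.
  intro He. induction n as [|n IH].
  - simpl Kf. pose proof (Rpower_pos (INR 1) (e+1)). lra.
  - rewrite Kf_step. set (T := INR (S n)) in *.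
    replace (INR (S (S n))) with (T + 1) by (unfold T; rewrite (S_INR (S n)); ring).
    assert (HT : 1 <= T) by apply INR_S_ge1.
    rewrite !Rpower_plus, !Rpower_1 by lra.
    assert (Rpower T e <= Rpower (T + 1) e) by (apply Rle_Rpower_l; lra).
    assert (T * Rpower T e <= T * Rpower (T + 1) e) by (apply Rmult_le_compat_l; lra).
    rewrite Rpower_plus, Rpower_1 in IH by lra. lra.
Qed.

Lemma Kf_bound_mid e n : -1 < e < 0 ->
  Kf e n <= (Rpower (INR (S n)) (e + 1) - 1) / (e + 1).
Proof.
  intro He. induction n as [|n IH].
  - simpl Kf. rewrite Rpower_1_base. unfold Rdiv. lra.
  - rewrite Kf_step. set (T := INR (S n)) in *.
    replace (INR (S (S n))) with (T + 1) by (unfold T; rewrite (S_INR (S n)); ring).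
    assert (HT : 1 <= T) by apply INR_S_ge1.
    pose proof (tele_pos (e + 1) T ltac:(lra) ltac:(lra)) as TP.
    replace (e + 1 - 1) with e in TP by ring.
    apply Rle_trans with ((Rpower T (e + 1) - 1) / (e + 1) + Rpower (T + 1) e); [lra|].
    apply Rmult_le_reg_r with (e + 1); [lra|].
    unfold Rdiv. rewrite Rmult_plus_distr_r, !Rmult_assoc, Rinv_l by lra. lra.
Qed.

Lemma Kf_bound_lt e n : e < -1 ->
  Kf e n <= (1 - Rpower (INR (S n)) (e + 1)) / (- (e + 1)).
Proof.
  intro He. induction n as [|n IH].
  - simpl Kf. rewrite Rpower_1_base. unfold Rdiv. lra.
  - rewrite Kf_step. set (T := INR (S n)) in *.
    replace (INR (S (S n))) with (T + 1) by (unfold T; rewrite (S_INR (S n)); ring).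
    assert (HT : 1 <= T) by apply INR_S_ge1.
    pose proof (tele_neg (e + 1) T ltac:(lra) ltac:(lra)) as TP.
    replace (e + 1 - 1) with e in TP by ring.
    apply Rle_trans with ((1 - Rpower T (e + 1)) / (- (e + 1)) + Rpower (T + 1) e); [lra|].
    apply Rmult_le_reg_r with (- (e + 1)); [lra|].
    unfold Rdiv. rewrite Rmult_plus_distr_r, !Rmult_assoc, Rinv_l by lra. lra.
Qed.

Lemma part2 (a sigma : R) (t : nat) :
  0 < sigma -> 0 < a -> a <= 1 -> a - sigma + 1 <> 0 -> (1 <= t)%nat ->
  Ssum a sigma 1 t <= Aconst1 a sigma * Rpower (INR t) (- Rmin (sigma - 1) a).
Proof.
  intros Hs Ha Ha1 Hne Ht.
  destruct t as [|n]; [lia|].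
  pose proof (p2_main a sigma n Hs (conj Ha Ha1)) as M.
  set (T := INR (S n)) in *. assert (HT : 1 <= T) by apply INR_S_ge1.
  unfold Aconst1. set (e := a - sigma) in *. assert (Ee : e = a - sigma) by reflexivity.
  pose proof (Rpower_pos 2 sigma) as P2.
  assert (Habs : 0 < Rabs (e + 1)) by (apply Rabs_pos_lt; auto).
  assert (Hinv : 0 < / Rabs (e + 1)) by (apply Rinv_0_lt_compat; auto).
  destruct (Rle_lt_dec 0 e) as [He|He].
  - rewrite Rmin_left by lra.
    pose proof (Kf_bound_ge0 e n He) as KB. fold T in KB.
    eapply Rle_trans; [exact M|].
    apply Rle_trans with (Rpower 2 sigma * Rpower T (- a) * Rpower T (e + 1)).
    { apply Rmult_le_compat_l; [apply Rmult_le_pos; left; [auto|apply Rpower_pos]|auto]. }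
    rewrite Rmult_assoc, <- Rpower_plus. replace (- a + (e + 1)) with (- (sigma - 1)) by (unfold e; ring).
    apply Rmult_le_compat_r; [left; apply Rpower_pos|]. nra.
  - destruct (Rlt_dec (-1) e) as [He2|He2].
    + rewrite Rmin_left by (unfold e in *; lra).
      pose proof (Kf_bound_mid e n (conj He2 He)) as KB. fold T in KB.

      rewrite Rabs_right in * by lra.
      eapply Rle_trans; [exact M|].
      apply Rle_trans with (Rpower 2 sigma * Rpower T (- a) * (Rpower T (e + 1) / (e + 1))).
      { apply Rmult_le_compat_l; [apply Rmult_le_pos; left; [auto|apply Rpower_pos]|].
        eapply Rle_trans; [exact KB|]. unfold Rdiv. apply Rmult_le_compat_r; [left; apply Rinv_0_lt_compat; lra|lra]. }
      unfold Rdiv. replace (Rpower 2 sigma * Rpower T (- a) * (Rpower T (e + 1) * / (e + 1)))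
        with (Rpower 2 sigma * / (e + 1) * (Rpower T (- a) * Rpower T (e + 1))) by ring.
      rewrite <- Rpower_plus. replace (- a + (e + 1)) with (- (sigma - 1)) by (unfold e; ring).
      apply Rmult_le_compat_r; [left; apply Rpower_pos|]. nra.
    + assert (He3 : e < -1) by (assert (e <> -1) by (intro; apply Hne; unfold e in *; lra); lra).
      rewrite Rmin_right by (unfold e in *; lra).
      pose proof (Kf_bound_lt e n He3) as KB. fold T in KB.

      rewrite Rabs_left in * by lra.
      pose proof (Rpower_pos T (e + 1)).
      eapply Rle_trans; [exact M|].
      apply Rle_trans with (Rpower 2 sigma * Rpower T (- a) * (/ (- (e + 1)))).
      { apply Rmult_le_compat_l; [apply Rmult_le_pos; left; [auto|apply Rpower_pos]|].
        eapply Rle_trans; [exact KB|]. unfold Rdiv. rewrite <- (Rmult_1_l (/ - (e + 1))) at 2. apply Rmult_le_compat_r; [lra|lra]. }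
      replace (Rpower 2 sigma * Rpower T (- a) * / - (e + 1)) with (Rpower 2 sigma * / - (e + 1) * Rpower T (- a)) by ring.
      apply Rmult_le_compat_r; [left; apply Rpower_pos|]. nra.
Qed.

Fixpoint Hs (sg : R) (n : nat) : R :=
  match n with O => 0 | S m => Hs sg m + / Rpower (INR (S m)) sg end.

Lemma Hs_step sg n : Hs sg (S n) = Hs sg n + / Rpower (INR (S n)) sg.
Proof. reflexivity. Qed.

Lemma INR_SS n : INR (S (S n)) = INR (S n) + 1.
Proof. rewrite (S_INR (S n)). reflexivity. Qed.

Lemma fac_bounds a d T : 0 <= d -> 0 < a <= 1 -> 1 <= T ->
  0 <= 1 - a / Rpower T d <= 1.
Proof.
  intros Hd Ha HT.
  assert (H1 : 1 <= Rpower T d).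
  { rewrite <- (Rpower_O T) by lra. apply Rle_Rpower; lra. }
  assert (a / Rpower T d <= 1).
  { apply Rmult_le_reg_r with (Rpower T d); [lra|]. unfold Rdiv.
    rewrite Rmult_assoc, Rinv_l by lra. lra. }
  assert (0 <= a / Rpower T d) by (unfold Rdiv; apply Rmult_le_pos; [lra|left; apply Rinv_0_lt_compat; lra]).
  lra.
Qed.

Lemma S_le_H a sg d n : 0 <= d -> 0 < a <= 1 ->
  0 <= Ssum a sg d (S n) <= Hs sg n.
Proof.
  intros Hd Ha. induction n as [|n IH].
  - rewrite Ssum_1. simpl. lra.
  - rewrite Ssum_rec, Hs_step.
    pose proof (fac_bounds a d (INR (S n)) Hd Ha (INR_S_ge1 n)) as F.
    assert (0 < / Rpower (INR (S n)) sg) by (apply Rinv_0_lt_compat, Rpower_pos).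
    destruct IH as [I1 I2]. destruct F as [F1 F2].
    split.
    + assert (0 <= (1 - a / Rpower (INR (S n)) d) * Ssum a sg d (S n)) by (apply Rmult_le_pos; lra). lra.
    + assert ((1 - a / Rpower (INR (S n)) d) * Ssum a sg d (S n) <= 1 * Ssum a sg d (S n))
        by (apply Rmult_le_compat_r; lra). lra.
Qed.

Lemma Hs_gt1 sg n : 1 < sg ->
  Hs sg (S n) <= 1 + (1 - Rpower (INR (S n)) (1 - sg)) / (sg - 1).
Proof.
  intro Hs1. induction n as [|n IH].
  - simpl Hs. rewrite !Rpower_1_base. unfold Rdiv. rewrite Rinv_1. lra.
  - rewrite Hs_step, INR_SS. set (T := INR (S n)) in *.
    assert (HT : 1 <= T) by apply INR_S_ge1.
    pose proof (tele_neg (1 - sg) T ltac:(lra) ltac:(lra)) as TP.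
    replace (1 - sg - 1) with (- sg) in TP by ring. rewrite Rpower_Ropp in TP.
    apply Rle_trans with (1 + (1 - Rpower T (1 - sg)) / (sg - 1) + / Rpower (T + 1) sg); [lra|].
    cut ((1 - Rpower T (1 - sg)) / (sg - 1) + / Rpower (T + 1) sg <= (1 - Rpower (T + 1) (1 - sg)) / (sg - 1)); [lra|].
    apply Rmult_le_reg_r with (sg - 1); [lra|].
    unfold Rdiv. rewrite Rmult_plus_distr_r, !Rmult_assoc, Rinv_l by lra. lra.
Qed.

Lemma Hs_eq1 n : Hs 1 (S n) <= 1 + ln (INR (S n)).
Proof.
  induction n as [|n IH].
  - simpl Hs. change (INR 1) with 1. rewrite Rpower_1, ln_1, Rinv_1 by lra. lra.
  - rewrite Hs_step, INR_SS. set (T := INR (S n)) in *.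
    assert (HT : 1 <= T) by apply INR_S_ge1.
    rewrite Rpower_1 by lra.
    assert (Hy : -1 < - / (T + 1)).
    { assert (/ (T+1) < 1). { rewrite <- Rinv_1. apply Rinv_lt_contravar; lra. } lra. }
    pose proof (ln_le_id _ Hy) as L.
    replace (1 + - / (T + 1)) with (T * / (T + 1)) in L by (field; lra).
    rewrite ln_mult, ln_Rinv in L by (try apply Rinv_0_lt_compat; lra). lra.
Qed.

Lemma Hs_lt1 sg n : 0 < sg < 1 ->
  Hs sg (S n) <= Rpower (INR (S n)) (1 - sg) / (1 - sg).
Proof.
  intro Hs1. induction n as [|n IH].
  - simpl Hs. rewrite !Rpower_1_base. rewrite Rinv_1.
    apply Rmult_le_reg_r with (1 - sg); [lra|]. unfold Rdiv.
    rewrite Rmult_assoc, Rinv_l by lra. lra.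
  - rewrite Hs_step, INR_SS. set (T := INR (S n)) in *.
    assert (HT : 1 <= T) by apply INR_S_ge1.
    pose proof (tele_pos (1 - sg) T ltac:(lra) ltac:(lra)) as TP.
    replace (1 - sg - 1) with (- sg) in TP by ring. rewrite Rpower_Ropp in TP.
    apply Rle_trans with (Rpower T (1 - sg) / (1 - sg) + / Rpower (T + 1) sg); [lra|].
    apply Rmult_le_reg_r with (1 - sg); [lra|].
    unfold Rdiv. rewrite Rmult_plus_distr_r, !Rmult_assoc, Rinv_l by lra. lra.
Qed.

Lemma p1_step a sg d A u :
  0 <= d -> d < sg -> 0 < a <= 1 -> 2 / a <= A ->
  2 * (sg - d) / a < Rpower (INR (S u)) (1 - d) ->
  Ssum a sg d (S u) <= A * Rpower (INR (S u)) (- (sg - d)) ->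
  Ssum a sg d (S (S u)) <= A * Rpower (INR (S (S u))) (- (sg - d)).
Proof.
  intros Hd Hds Ha HA Hcond IH.
  rewrite Ssum_rec, INR_SS. set (T := INR (S u)) in *.
  assert (HT : 1 <= T) by apply INR_S_ge1.
  set (b := sg - d) in *. assert (Hb : 0 < b) by (unfold b; lra).
  assert (HA0 : 0 < A).
  { apply Rlt_le_trans with (2 / a); auto. apply Rdiv_lt_0_compat; lra. }
  set (U := Rpower T d). assert (HU : 0 < U) by apply Rpower_pos.
  set (V := / Rpower T sg). assert (HV : 0 < V) by (apply Rinv_0_lt_compat, Rpower_pos).
  assert (EW : Rpower T (- b) = U * V).
  { unfold U, V, b. rewrite <- Rpower_Ropp, <- Rpower_plus. f_equal. ring. }
  assert (E1 : Rpower T (1 - d) = T / U).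
  { unfold U. unfold Rminus. rewrite Rpower_plus, Rpower_Ropp, Rpower_1 by lra. reflexivity. }
  rewrite E1 in Hcond. rewrite EW in IH.
  pose proof (step_pow b T ltac:(lra) ltac:(lra)) as SP. rewrite EW in SP.
  assert (C1 : 2 * b * U < a * T).
  { apply Rmult_lt_compat_r with (r := a * U) in Hcond; [|nra].
    replace (2 * b / a * (a * U)) with (2 * b * U) in Hcond by (field; lra).
    replace (T / U * (a * U)) with (a * T) in Hcond by (field; lra). exact Hcond. }
  pose proof (fac_bounds a d T Hd Ha HT) as [F1 F2].
  fold U in F1, F2.
  assert (L1 : (1 - a / U) * Ssum a sg d (S u) <= (1 - a / U) * (A * (U * V)))
    by (apply Rmult_le_compat_l; lra).
  assert (L2 : A * ((1 - b / T) * (U * V)) <= A * Rpower (T + 1) (- b))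
    by (apply Rmult_le_compat_l; lra).
  assert (E2 : (1 - a / U) * (A * (U * V)) = A * U * V - a * A * V) by (field; lra).
  assert (E3 : A * ((1 - b / T) * (U * V)) = A * U * V - A * V * (b * U / T)) by (field; lra).
  assert (Z : b * U / T <= a / 2).
  { apply Rmult_le_reg_r with (2 * T); [lra|].
    replace (b * U / T * (2 * T)) with (2 * b * U) by (field; lra).
    replace (a / 2 * (2 * T)) with (a * T) by field. lra. }
  assert (Z2 : A * V * (b * U / T) <= A * V * (a / 2)) by (apply Rmult_le_compat_l; nra).
  assert (Z3 : 1 <= a * A / 2).
  { apply Rmult_le_compat_l with (r := a) in HA; [|lra].
    replace (a * (2 / a)) with 2 in HA by (field; lra). lra. }
  assert (Z4 : V * 1 <= V * (a * A / 2)) by (apply Rmult_le_compat_l; lra).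
  lra.
Qed.

Lemma ln_le' x y : 0 < x -> x <= y -> ln x <= ln y.
Proof.
  intros Hx Hxy. destruct (Rle_dec (ln x) (ln y)) as [H|H]; auto.
  apply Rnot_le_lt in H. apply exp_increasing in H. rewrite !exp_ln in H by lra. lra.
Qed.

Lemma pow15 sg : 1 <= sg -> sg <= Rpower (3/2) sg.
Proof.
  intro H. destruct (Rle_dec sg 2) as [H2|H2].
  - pose proof (bern_conv sg (1/2) H ltac:(lra)) as B.
    replace (1 + 1/2) with (3/2) in B by field. lra.
  - pose proof (bern_conv (sg/2) (1/2) ltac:(lra) ltac:(lra)) as B.
    replace (1 + 1/2) with (3/2) in B by field.
    replace sg with (sg/2 + sg/2) at 2 by field. rewrite Rpower_plus.
    set (y := Rpower (3/2) (sg/2)) in *. apply Rnot_le_lt in H2. assert (1 + sg/4 <= y) by lra. assert ((1 + sg/4) * (1 + sg/4) <= y * y) by (apply Rmult_le_compat; lra). assert (0 <= (sg - 4) * (sg - 4)) by apply Rle_0_sqr. lra.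
Qed.

Lemma K1 sg m : 1 < sg -> (m = 1%nat -> sg <= 3) ->
  let N := INR (S m) in
  Hs sg (S m) * Rpower (N + 1) sg <= Rpower 2 sg + Rpower 2 sg * Rpower N sg / (sg - 1).
Proof.
  intros Hs1 H3 N.
  assert (HN : 1 <= N) by apply INR_S_ge1.
  pose proof (Rpower_pos 2 sg) as P2. pose proof (Rpower_pos N sg) as PN.
  pose proof (Rpower_pos (N+1) sg) as PN1.
  assert (Hi : 0 < / (sg - 1)) by (apply Rinv_0_lt_compat; lra).
  destruct m as [|[|m]].
  - simpl Hs. unfold N. change (INR 1) with 1. rewrite !Rpower_1_base.
    replace (1 + 1) with 2 by ring. rewrite Rinv_1. unfold Rdiv.
    assert (0 <= Rpower 2 sg * 1 * / (sg - 1)) by (apply Rmult_le_pos; lra). lra.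
  - specialize (H3 eq_refl).
    simpl Hs. unfold N. change (INR 2) with 2. change (INR 1) with 1. rewrite Rpower_1_base, Rinv_1.
    replace (2 + 1) with 3 by ring.
    assert (E1 : Rpower 3 sg = Rpower 2 sg * Rpower (3/2) sg)
      by (rewrite Rpower_mult_distr by lra; f_equal; field).
    assert (E2 : Rpower 3 sg = Rpower 4 sg * Rpower (3/4) sg)
      by (rewrite Rpower_mult_distr by lra; f_equal; field).
    assert (E4 : Rpower 4 sg = Rpower 2 sg * Rpower 2 sg)
      by (rewrite Rpower_mult_distr by lra; f_equal; field).
    assert (Q1 : Rpower (3/2) sg <= Rpower 2 sg) by (apply Rle_Rpower_l; lra).
    pose proof (bern_conv sg (1/3) ltac:(lra) ltac:(lra)) as B.
    replace (1 + 1/3) with (4/3) in B by field.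
    assert (E5 : Rpower (4/3) sg * Rpower (3/4) sg = 1)
      by (rewrite Rpower_mult_distr by lra; replace (4/3*(3/4)) with 1 by field; apply Rpower_1_base).
    pose proof (Rpower_pos (3/4) sg). pose proof (Rpower_pos (3/2) sg).
    (* (4/3)^s >= s - 1 so (3/4)^s (s-1) <= 1 *)
    assert (B2 : Rpower (3/4) sg * (sg - 1) <= 1).
    { rewrite <- E5, (Rmult_comm (Rpower (4/3) sg)). apply Rmult_le_compat_l; lra. }
    replace (1 + 1) with 2 by ring.
    replace ((0 + 1 + / Rpower 2 sg) * Rpower 3 sg) with (Rpower 3 sg + / Rpower 2 sg * Rpower 3 sg) by ring.
    assert (E6 : / Rpower 2 sg * Rpower 3 sg = Rpower (3/2) sg) by (rewrite E1; field; lra).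
    rewrite E6. rewrite E2, E4.
    set (w := Rpower 2 sg) in *. set (r := Rpower (3/4) sg) in *.
    assert (w * w * r <= w * w / (sg - 1)).
    { assert (0 < w * w) by nra.
      apply Rmult_le_reg_r with (sg - 1); [lra|]. unfold Rdiv.
      replace (w * w * / (sg - 1) * (sg - 1)) with (w * w) by (field; lra).
      replace (w * w * r * (sg - 1)) with ((w * w) * (r * (sg - 1))) by ring.
      rewrite <- (Rmult_1_r (w * w)) at 2. apply Rmult_le_compat_l; lra. }
    lra.
  -
    assert (HN3 : 3 <= N) by (unfold N; rewrite !S_INR; pose proof (pos_INR m); lra).
    pose proof (Hs_gt1 sg (S (S m)) Hs1) as HB. fold N in HB.
    pose proof (Rpower_pos N (1 - sg)).
    assert (Hq : Rpower (3/2) sg <= Rpower (2 * N / (N + 1)) sg).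
    { apply Rle_Rpower_l; [lra|]. split; [lra|].
      apply Rmult_le_reg_r with (2 * (N + 1)); [lra|].
      replace (2 * N / (N + 1) * (2 * (N + 1))) with (4 * N) by (field; lra). lra. }
    pose proof (pow15 sg ltac:(lra)) as P15.
    assert (Eq : Rpower (2 * N / (N + 1)) sg * Rpower (N + 1) sg = Rpower 2 sg * Rpower N sg).
    { rewrite !Rpower_mult_distr by (try lra; apply Rdiv_lt_0_compat; lra). f_equal. field. lra. }
    (* Hs <= 1 + 1/(s-1) = s/(s-1) <= q^s/(s-1) *)
    assert (HB2 : Hs sg (S (S (S m))) <= Rpower (2 * N / (N + 1)) sg / (sg - 1)).
    { eapply Rle_trans; [exact HB|].
      apply Rmult_le_reg_r with (sg - 1); [lra|].
      replace ((1 + (1 - Rpower N (1 - sg)) / (sg - 1)) * (sg - 1)) with (sg - Rpower N (1 - sg)) by (field; lra).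
      replace (Rpower (2 * N / (N + 1)) sg / (sg - 1) * (sg - 1)) with (Rpower (2 * N / (N + 1)) sg) by (field; lra).
      lra. }
    apply Rmult_le_compat_r with (r := Rpower (N + 1) sg) in HB2; [|lra].
    eapply Rle_trans; [exact HB2|].
    replace (Rpower (2 * N / (N + 1)) sg / (sg - 1) * Rpower (N + 1) sg)
      with (Rpower (2 * N / (N + 1)) sg * Rpower (N + 1) sg / (sg - 1)) by (field; lra).
    rewrite Eq. lra.
Qed.

Lemma base_gt1 a sg d m : 1 < sg -> 0 <= d < 1 -> 0 < a <= 1 ->
  Rpower (INR (S m)) (1 - d) <= 2 * (sg - d) / a ->
  2 * (sg - d) < INR (S m) + 1 ->
  Hs sg (S m) <= Aconst a sg d * Rpower (INR (S m) + 1) (- (sg - d)).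
Proof.
  intros Hs1 Hd Ha Hx Hc.
  set (N := INR (S m)) in *. assert (HN : 1 <= N) by apply INR_S_ge1.
  assert (H3 : m = 1%nat -> sg <= 3).
  { intro E. subst m. unfold N in Hc. change (INR 2) with 2 in Hc. lra. }
  pose proof (K1 sg m Hs1 H3) as K. cbv zeta in K. fold N in K.
  set (b := sg - d) in *.
  assert (Eb : sg = b + d) by (unfold b; ring).
  assert (EP : Rpower (N + 1) sg = Rpower (N + 1) b * Rpower (N + 1) d) by (rewrite Eb, Rpower_plus; reflexivity).
  assert (EN : Rpower N sg = Rpower N b * Rpower N d) by (rewrite Eb, Rpower_plus; reflexivity).
  assert (D1 : 1 <= Rpower (N + 1) d) by (apply Rle_trans with (Rpower (N+1) 0); [rewrite Rpower_O; lra | apply Rle_Rpower; lra]).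
  assert (D2 : Rpower N d <= Rpower (N + 1) d) by (apply Rle_Rpower_l; lra).
  pose proof (Rpower_pos 2 sg) as P2. pose proof (Rpower_pos N b) as PNb.
  pose proof (Rpower_pos (N+1) b) as PN1b. pose proof (Rpower_pos (N+1) d) as PN1d.
  assert (Hi : 0 < / (sg - 1)) by (apply Rinv_0_lt_compat; lra).
  assert (KEY : Hs sg (S m) * Rpower (N + 1) b <= Rpower 2 sg * (1 + Rpower N b / (sg - 1))).
  { apply Rmult_le_reg_r with (Rpower (N + 1) d); [lra|].
    rewrite Rmult_assoc, <- EP.
    eapply Rle_trans; [exact K|]. rewrite EN. unfold Rdiv.
    set (Q := Rpower 2 sg * Rpower N b * / (sg - 1)).
    assert (HQ : 0 < Q) by (unfold Q; repeat apply Rmult_lt_0_compat; auto).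
    replace (Rpower 2 sg * (Rpower N b * Rpower N d) * / (sg - 1)) with (Q * Rpower N d) by (unfold Q; ring).
    replace (Rpower 2 sg * (1 + Rpower N b * / (sg - 1)) * Rpower (N + 1) d)
      with (Rpower 2 sg * Rpower (N + 1) d + Q * Rpower (N + 1) d) by (unfold Q; ring).
    assert (Rpower 2 sg * 1 <= Rpower 2 sg * Rpower (N + 1) d) by (apply Rmult_le_compat_l; lra).
    assert (Q * Rpower N d <= Q * Rpower (N + 1) d) by (apply Rmult_le_compat_l; lra).
    lra. }
  assert (HY : Rpower N b <= Rpower (2 * b / a) (b / (1 - d))).
  { replace (Rpower N b) with (Rpower (Rpower N (1 - d)) (b / (1 - d))).
    - apply Rle_Rpower_l. left; apply Rdiv_lt_0_compat; unfold b in *; lra. split; [apply Rpower_pos|exact Hx].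
    - rewrite Rpower_mult. f_equal. field. lra. }
  assert (HA : Rpower 2 sg * (1 + Rpower N b / (sg - 1)) <= Aconst a sg d).
  { unfold Aconst. destruct (Rlt_dec 1 sg) as [_|NN]; [|lra].
    fold b. apply Rmult_le_compat_l; [lra|]. eapply Rle_trans; [|apply Rmax_r].
    unfold Rdiv. apply Rplus_le_compat_l. rewrite (Rmult_comm (/ (sg - 1))).
    apply Rmult_le_compat_r; lra. }
  rewrite Rpower_Ropp.
  apply Rmult_le_reg_r with (Rpower (N + 1) b); [lra|].
  rewrite Rmult_assoc, Rinv_l, Rmult_1_r by lra. lra.
Qed.

Lemma base_lt1 a sg d m : 0 < sg < 1 -> 0 <= d < sg -> 0 < a <= 1 ->
  Rpower (INR (S m)) (1 - d) <= 2 * (sg - d) / a ->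
  Hs sg (S m) <= Aconst a sg d * Rpower (INR (S m) + 1) (- (sg - d)).
Proof.
  intros Hs1 Hd Ha Hx.
  pose proof (Hs_lt1 sg m Hs1) as HB.
  set (N := INR (S m)) in *. assert (HN : 1 <= N) by apply INR_S_ge1.
  set (b := sg - d) in *. set (X := 2 * b / a) in *. assert (Eb : b = sg - d) by reflexivity.
  assert (HX : 0 < X) by (unfold X, b; apply Rdiv_lt_0_compat; lra).
  pose proof (Rpower_pos 2 sg) as P2. pose proof (Rpower_pos (N+1) b) as PN1b.
  pose proof (Rpower_pos N (1 - sg)) as PNs.
  assert (S1 : Rpower (N + 1) b <= Rpower 2 b * Rpower N b).
  { rewrite Rpower_mult_distr by lra. apply Rle_Rpower_l; lra. }
  assert (S2 : Rpower N (1 - sg) * Rpower N b = Rpower N (1 - d)).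
  { rewrite <- Rpower_plus. f_equal. unfold b; ring. }
  assert (S3 : Rpower 2 b <= Rpower 2 sg) by (apply Rle_Rpower; unfold b; lra).
  assert (S4 : Rpower N (1 - sg) * Rpower (N + 1) b <= Rpower 2 sg * X).
  { apply Rle_trans with (Rpower N (1 - sg) * (Rpower 2 b * Rpower N b)).
    apply Rmult_le_compat_l; lra.
    replace (Rpower N (1 - sg) * (Rpower 2 b * Rpower N b)) with (Rpower 2 b * Rpower N (1 - d))
      by (rewrite <- S2; ring).
    apply Rmult_le_compat; try lra; left; apply Rpower_pos. }
  assert (HA : Rpower 2 sg * X / (1 - sg) <= Aconst a sg d).
  { unfold Aconst. destruct (Rlt_dec 1 sg) as [NN|_]; [lra|].
    destruct (Req_EM_T sg 1) as [NN|_]; [lra|].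
    unfold Rdiv. rewrite Rmult_assoc. apply Rmult_le_compat_l; [lra|].
    eapply Rle_trans; [|apply Rmax_r]. fold b.
    replace (2 * b * / (a * (1 - sg))) with (X * / (1 - sg)) by (unfold X; field; lra).
    lra. }
  rewrite Rpower_Ropp.
  apply Rmult_le_reg_r with (Rpower (N + 1) b); [lra|].
  rewrite Rmult_assoc, Rinv_l, Rmult_1_r by lra.
  eapply Rle_trans; [|exact HA].
  apply Rle_trans with (Rpower N (1 - sg) / (1 - sg) * Rpower (N + 1) b).
  apply Rmult_le_compat_r; lra.
  unfold Rdiv. rewrite (Rmult_comm (Rpower 2 sg * X)), (Rmult_comm (Rpower N (1 - sg))), Rmult_assoc.
  apply Rmult_le_compat_l; [left; apply Rinv_0_lt_compat; lra|lra].
Qed.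

Lemma base_eq1 a d m : 0 <= d < 1 -> 0 < a <= 1 ->
  Rpower (INR (S m)) (1 - d) <= 2 * (1 - d) / a ->
  Hs 1 (S m) <= Aconst a 1 d * Rpower (INR (S m) + 1) (- (1 - d)).
Proof.
  intros Hd Ha Hx.
  pose proof (Hs_eq1 m) as HB.
  set (N := INR (S m)) in *. assert (HN : 1 <= N) by apply INR_S_ge1.
  set (X := 2 * (1 - d) / a) in *.
  set (c := 1 - d) in *.
  set (mm := Rpower N c).
  assert (Hm1 : 1 <= mm).
  { apply Rle_trans with (Rpower N 0); [rewrite Rpower_O; lra|]. apply Rle_Rpower; unfold c; lra. }
  assert (Hsub : Rpower (N + 1) c <= mm + 1).
  { replace (N + 1) with (N * (1 + / N)) by (field; lra).
    assert (0 < / N) by (apply Rinv_0_lt_compat; lra).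
    rewrite <- Rpower_mult_distr by lra.
    pose proof (bern_conc c (/ N) ltac:(unfold c; lra) ltac:(lra)) as B.
    assert (Hmn : mm * / N <= 1).
    { unfold mm. rewrite <- (Rpower_1 N) at 2 by lra. rewrite <- Rpower_Ropp, <- Rpower_plus.
      apply Rle_trans with (Rpower N 0); [apply Rle_Rpower; unfold c; lra|rewrite Rpower_O; lra]. }
    fold mm. assert (mm * Rpower (1 + / N) c <= mm * (1 + c * / N)) by (apply Rmult_le_compat_l; lra).
    assert (mm * (1 + c * / N) = mm + c * (mm * / N)) by ring.
    assert (c * (mm * / N) <= 1 * 1) by (apply Rmult_le_compat; unfold c in *; try lra; apply Rmult_le_pos; lra).
    lra. }
  set (L := ln N) in *.
  assert (HL : 0 <= L) by (unfold L; rewrite <- ln_1; apply ln_le'; lra).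
  assert (HmX : mm <= X) by exact Hx.
  assert (HXa : X <= 2 / a).
  { unfold X. unfold Rdiv. apply Rmult_le_compat_r; [left; apply Rinv_0_lt_compat; lra|unfold c; lra]. }
  assert (HmL : mm * L <= 2 / a * ln X).
  { assert (E : ln mm = c * L) by (unfold mm, L; apply ln_Rpower).
    assert (E2 : 2 / a = X / c) by (unfold X; field; unfold c; lra).
    assert (Hlm : 0 <= ln mm) by (rewrite <- ln_1; apply ln_le'; lra).
    assert (HlX : ln mm <= ln X) by (apply ln_le'; lra).
    assert (mm * ln mm <= X * ln X) by (apply Rmult_le_compat; lra).
    rewrite E2. replace L with (ln mm / c) by (rewrite E; field; unfold c; lra).
    unfold Rdiv. replace (mm * (ln mm * / c)) with ((mm * ln mm) * / c) by ring.
    replace (X * / c * ln X) with ((X * ln X) * / c) by ring.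
    apply Rmult_le_compat_r; [left; apply Rinv_0_lt_compat; unfold c; lra|lra]. }
  set (M := Rmax (1 + 2 / a) (1 + 2 / a * ln X)).
  assert (HM1 : 1 + 2 / a <= M) by apply Rmax_l.
  assert (HM2 : 1 + 2 / a * ln X <= M) by apply Rmax_r.
  assert (KEY : (1 + L) * (mm + 1) <= 2 * M).
  { destruct (Rle_dec L 1).
    - assert ((1 + L) * (mm + 1) <= 2 * (mm + 1)) by (apply Rmult_le_compat_r; lra). lra.
    - assert (0 <= (mm - 1) * (L - 1)) by (apply Rmult_le_pos; lra). nra. }
  assert (HA : Aconst a 1 d = 2 * M).
  { unfold Aconst. destruct (Rlt_dec 1 1) as [NN|_]; [lra|].
    destruct (Req_EM_T 1 1) as [_|NN]; [|lra]. rewrite Rpower_1 by lra. reflexivity. }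
  rewrite HA, Rpower_Ropp.
  pose proof (Rpower_pos (N+1) c).
  apply Rmult_le_reg_r with (Rpower (N + 1) c); [lra|].
  rewrite Rmult_assoc, Rinv_l, Rmult_1_r by lra.
  apply Rle_trans with ((1 + L) * Rpower (N + 1) c). apply Rmult_le_compat_r; lra.
  apply Rle_trans with ((1 + L) * (mm + 1)); [apply Rmult_le_compat_l; lra|lra].
Qed.

Lemma part1 (a sigma delta : R) (t : nat) :
  0 < sigma -> 0 <= delta -> delta < Rmin 1 sigma -> 0 < a -> a <= 1 ->
  Rpower (2 * (sigma - delta) / a) (1 / (1 - delta)) < INR t ->
  Ssum a sigma delta t <= Aconst a sigma delta * Rpower (INR t) (- (sigma - delta)).
Proof.
  intros Hs Hd Hdm Ha Ha1.
  assert (Hd1 : delta < 1) by (pose proof (Rmin_l 1 sigma); lra).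
  assert (Hds : delta < sigma) by (pose proof (Rmin_r 1 sigma); lra).
  set (X := 2 * (sigma - delta) / a).
  assert (HX : 0 < X) by (unfold X; apply Rdiv_lt_0_compat; lra).
  set (tau := Rpower X (1 / (1 - delta))).
  assert (Htau : 0 < tau) by apply Rpower_pos.
  assert (Etau : Rpower tau (1 - delta) = X).
  { unfold tau. rewrite Rpower_mult. replace (1 / (1 - delta) * (1 - delta)) with 1 by (field; lra).
    apply Rpower_1; lra. }
  set (A := Aconst a sigma delta).
  assert (HA : 2 / a <= A).
  { unfold A, Aconst.
    assert (1 <= Rpower 2 sigma) by (apply Rle_trans with (Rpower 2 0); [rewrite Rpower_O; lra|apply Rle_Rpower; lra]).
    assert (H1 : 1 + 2 / a <= Rmax (1 + 2 / a) (if Rlt_dec 1 sigma then 1 + / (sigma - 1) * Rpower (2 * (sigma - delta) / a) ((sigma - delta) / (1 - delta)) else if Req_EM_T sigma 1 then 1 + 2 / a * ln (2 * (1 - delta) / a) else 1 + 2 * (sigma - delta) / (a * (1 - sigma)))) by apply Rmax_l.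
    assert (0 < 2 / a) by (apply Rdiv_lt_0_compat; lra).
    set (MM := Rmax _ _) in *.
    assert (1 * MM <= Rpower 2 sigma * MM) by (apply Rmult_le_compat_r; lra). lra. }
  assert (HA0 : 0 < A) by (apply Rlt_le_trans with (2 / a); [apply Rdiv_lt_0_compat|]; lra).
  induction t as [|u IH]; intro Ht.
  - simpl in Ht. lra.
  - destruct u as [|m].
    + rewrite Ssum_1. pose proof (Rpower_pos (INR 1) (- (sigma - delta))). nra.
    + destruct (Rlt_dec tau (INR (S m))) as [Hlt|Hge].
      * apply p1_step; try lra.
        -- change (X < Rpower (INR (S m)) (1 - delta)). rewrite <- Etau. apply Rlt_Rpower_l; lra.
      * apply Rnot_lt_le in Hge.
        pose proof (S_le_H a sigma delta (S m) Hd (conj Ha Ha1)) as [_ SH].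
        eapply Rle_trans; [exact SH|].
        assert (HN : 1 <= INR (S m)) by apply INR_S_ge1.
        assert (Hx : Rpower (INR (S m)) (1 - delta) <= X).
        { rewrite <- Etau. apply Rle_Rpower_l; lra. }
        rewrite INR_SS.
        destruct (total_order_T sigma 1) as [[Hlt1|Heq1]|Hgt1].
        -- apply base_lt1; auto; lra.
        -- subst sigma. apply base_eq1; auto; lra.
        -- apply base_gt1; auto; try lra.
           assert (X <= tau).
           { rewrite <- Etau. rewrite <- (Rpower_1 tau) at 2 by lra. apply Rle_Rpower; lra. }
           assert (2 * (sigma - delta) <= X).
           { unfold X. unfold Rdiv. apply Rle_trans with (2 * (sigma - delta) * 1); [lra|].
             apply Rmult_le_compat_l; [lra|]. rewrite <- Rinv_1. apply Rinv_le_contravar; lra. }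
           rewrite INR_SS in Ht. lra.
Qed.

Theorem lemma6 :
  (forall (a sigma delta : R) (t : nat),
     0 < sigma -> 0 <= delta -> delta < Rmin 1 sigma -> 0 < a -> a <= 1 ->
     Rpower (2 * (sigma - delta) / a) (1 / (1 - delta)) < INR t ->
     Ssum a sigma delta t <= Aconst a sigma delta * Rpower (INR t) (- (sigma - delta)))
  /\
  (forall (a sigma : R) (t : nat),
     0 < sigma -> 0 < a -> a <= 1 -> a - sigma + 1 <> 0 -> (1 <= t)%nat ->
     Ssum a sigma 1 t <= Aconst1 a sigma * Rpower (INR t) (- Rmin (sigma - 1) a)).
Proof.
  split; [exact part1 | exact part2].
Qed.
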